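(* Let $\mathcal W$ be a cylindric wiring diagram of a bi-infinite reduced word in $\hat S_n$, lifted to the universal cover with wire and chamber labels as below, and let $\tau:\mathbb Z^n\to\mathbb R\setminus\{0\}$ be a cylindric Berenstein–Hirota–Zelevinsky datum. Suppose every crossing of $\mathcal W$ carries the weight $$a=(\alpha_i-\alpha_j)\frac{\tau(\mathbf s)\,\tau(\mathbf s+e_i+e_j)}{\tau(\mathbf s+e_i)\,\tau(\mathbf s+e_j)},$$ where $i$ and $j$ are the residues mod $n$ of the labels of the upper and lower wires of (a lift of) the crossing, $\mathbf s$ is the label of the chamber directly below it (so that the chamber directly above has label $\mathbf s+e_i+e_j$ and the two side chambers have labels $\mathbf s+e_i$, $\mathbf s+e_j$). Then after applying any finite sequence of weighted braid moves and commutation moves to $\mathcal W$, the weight of every crossing of the resulting diagram is again given by the same formula (with the chamber labels of the new diagram).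
   Context: $\hat S_n$: generators $s_0,\dots,s_{n-1}$ (indices mod $n$), relations $s_i^2=1$, $s_is_js_i=s_js_is_j$ if $i-j\equiv\pm1$, $s_is_j=s_js_i$ if $i-j\not\equiv0,\pm1\pmod n$. Wiring diagram: letters are drawn left to right on a cylinder with wires in positions $1,\dots,n$ (mod $n$), $s_i$ being a crossing of positions $i,i+1$ ($s_0$: positions $n$ and $1$); the upper wire of a crossing is the one passing from the higher to the lower position. Universal cover: positions are integers, each crossing lifting to crossings of positions $p,p+1$ for all $p\equiv i$; lifted wires are labelled by integers according to their positions at a fixed vertical line, and labels are carried along by moves. Chamber label: if $S$ is the set of labels of wires passing below a chamber, its label is $(\mathbf s_1,\dots,\mathbf s_n)$ with $\mathbf s_i=\lceil\max\{b\in S:b\equiv i \bmod n\}/n\rceil$. Each wire labelled $b$ has parameter $\alpha_{b \bmod n}$ where $\alpha_1,\dots,\alpha_n$ are fixed reals (residues taken in $\{1,\dots,n\}$). $e_1,\dots,e_n$ is the standard basis of $\mathbb Z^n$. A BHZ datum is a function $\tau:\mathbb Z^n\to\mathbb R$ such that for all $\mathbf s\in\mathbb Z^n$ and distinct $i,j,k\in\{1,\dots,n\}$: $(\alpha_i-\alpha_j)\tau(\mathbf s+e_k)\tau(\mathbf s+e_i+e_j)+(\alpha_j-\alpha_k)\tau(\mathbf s+e_i)\tau(\mathbf s+e_j+e_k)+(\alpha_k-\alpha_i)\tau(\mathbf s+e_j)\tau(\mathbf s+e_i+e_k)=0$; it is cylindric if moreover $\tau(\mathbf s+e_1+\dots+e_n)=\tau(\mathbf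 s)$ for all $\mathbf s$ (so the weight formula does not depend on the chosen lift). Weighted moves: $s_i(a)s_j(b)s_i(c)\mapsto s_j(\tfrac{bc}{a+c})s_i(a+c)s_j(\tfrac{ab}{a+c})$ if $i-j\equiv\pm1$, $s_i(a)s_j(b)\mapsto s_j(b)s_i(a)$ if $i-j\not\equiv0,\pm1\pmod n$. *)

(* Defs.v *)
From HB Require Import structures.
From mathcomp Require Import all_boot all_order all_algebra.
Set Implicit Arguments. Unset Strict Implicit. Unset Printing Implicit Defensive.
Import Order.TTheory GRing.Theory Num.Theory.
Local Open Scope ring_scope.

(** Residues: an integer position/label [b] has residue class [(b %% n)%Z],
    an element of {0,...,n-1}; residue class 0 plays the role of residue n.
    Coordinates of Z^n, the parameters alpha, and the letters s_0..s_{n-1}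
    are all indexed by ['I_n] through these residue classes. *)

(** Action of the generator s_i on positions of the universal cover:
    it exchanges positions p and p+1 for every p = i (mod n). *)
Definition swap (n : nat) (i : 'I_n) (p : int) : int :=
  if (p %% n)%Z == (i : nat)%:Z then p + 1
  else if (p %% n)%Z == (((i : nat)%:Z + 1) %% n)%Z then p - 1
  else p.

(** The element of \hat S_n represented by a finite word, realized
    (faithfully) as an affine permutation of Z. *)
Definition word_prod (n : nat) (l : seq 'I_n) : int -> int :=
  foldr (fun i f => fun p => swap i (f p)) id l.

Definition reduced_word (n : nat) (l : seq 'I_n) : Prop :=
  forall l' : seq 'I_n, (forall p, word_prod l' p = word_prod l p) ->
    (size l <= size l')%N.

(** A bi-infinite word (letters indexed by Z, left to right) is reduced if
    all its finite factors are reduced. *)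
Definition biinf_reduced (n : nat) (w : int -> 'I_n) : Prop :=
  forall (a : int) (k : nat), reduced_word [seq w (a + (j : nat)%:Z) | j <- iota 0 k].

Definition adjacent (n : nat) (i j : 'I_n) : Prop :=
  ((((i : nat)%:Z - (j : nat)%:Z) %% n)%Z = 1) \/
  ((((j : nat)%:Z - (i : nat)%:Z) %% n)%Z = 1).
Definition distant (n : nat) (i j : 'I_n) : Prop :=
  i <> j /\ ~ adjacent i j.

(** A weighted (lifted) wiring diagram: the word, the weights of its letters,
    and the labelling [lab t p] = label of the lifted wire occupying position
    p on the vertical line t (the line just left of letter t). *)
Record diagram (R : Type) (n : nat) := Diagram {
  word : int -> 'I_n;
  wt : int -> R;
  lab : int -> int -> int }.

Definition consistent (R : Type) (n : nat) (D : diagram R n) : Prop :=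
  forall t p, lab D (t + 1) p = lab D t (swap (word D t) p).

Definition braid_move (R : fieldType) (n : nat) (k : int)
    (D D' : diagram R n) : Prop :=
  let i := word D k in let j := word D (k + 1) in
  let a := wt D k in let b := wt D (k + 1) in let c := wt D (k + 2) in
  [/\ word D (k + 2) = i, adjacent i j & a + c != 0] /\
  [/\ word D' k = j, word D' (k + 1) = i & word D' (k + 2) = j] /\
  [/\ wt D' k = b * c / (a + c), wt D' (k + 1) = a + c &
       wt D' (k + 2) = a * b / (a + c)] /\
  (forall t, t != k -> t != k + 1 -> t != k + 2 ->
     word D' t = word D t /\ wt D' t = wt D t) /\
  consistent D' /\ (forall t p, t <= k -> lab D' t p = lab D t p).

Definition comm_move (R : fieldType) (n : nat) (k : int)
    (D D' : diagram R n) : Prop :=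
  let i := word D k in let j := word D (k + 1) in
  distant i j /\
  (word D' k = j /\ word D' (k + 1) = i) /\
  (wt D' k = wt D (k + 1) /\ wt D' (k + 1) = wt D k) /\
  (forall t, t != k -> t != k + 1 ->
     word D' t = word D t /\ wt D' t = wt D t) /\
  consistent D' /\ (forall t p, t <= k -> lab D' t p = lab D t p).

Definition move (R : fieldType) (n : nat) (D D' : diagram R n) : Prop :=
  exists k, braid_move k D D' \/ comm_move k D D'.

Inductive reachable (R : fieldType) (n : nat) (D : diagram R n) :
    diagram R n -> Prop :=
| reach_refl : reachable D D
| reach_step D1 D2 : reachable D D1 -> move D1 D2 -> reachable D D2.

Definition e_ (n : nat) (k : 'I_n) : 'rV[int]_n := delta_mx 0 k.

Definition ceil_div (m : int) (n : nat) : int := - ((- m) %/ (n : nat)%:Z)%Z.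

(** [b] is the label of a wire passing below the chamber directly below the
    lift at positions (p, p+1) of the crossing of letter t, i.e. a wire in a
    position q < p on line t. *)
Definition below_chamber (L : int -> int -> int) (t p b : int) : Prop :=
  exists q, q < p /\ L t q = b.

Definition chamber_label (n : nat) (L : int -> int -> int) (t p : int)
    (s : 'rV[int]_n) : Prop :=
  forall r : 'I_n, exists m : int,
    [/\ below_chamber L t p m, (m %% n)%Z = (r : nat)%:Z,
        (forall b, below_chamber L t p b -> (b %% n)%Z = (r : nat)%:Z -> b <= m)
      & s 0 r = ceil_div m n].

Definition BHZ_datum (R : ringType) (n : nat) (alpha : 'I_n -> R)
    (tau : 'rV[int]_n -> R) : Prop :=
  forall (s : 'rV[int]_n) (i j k : 'I_n), i != j -> j != k -> i != k ->
    (alpha i - alpha j) * tau (s + e_ k) * tau (s + e_ i + e_ j)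
  + (alpha j - alpha k) * tau (s + e_ i) * tau (s + e_ j + e_ k)
  + (alpha k - alpha i) * tau (s + e_ j) * tau (s + e_ i + e_ k) = 0.

Definition cylindric (R : Type) (n : nat) (tau : 'rV[int]_n -> R) : Prop :=
  forall s : 'rV[int]_n, tau (s + const_mx 1) = tau s.

Definition crossing_weight (R : fieldType) (n : nat) (alpha : 'I_n -> R)
    (tau : 'rV[int]_n -> R) (i j : 'I_n) (s : 'rV[int]_n) : R :=
  (alpha i - alpha j) * (tau s * tau (s + e_ i + e_ j))
    / (tau (s + e_ i) * tau (s + e_ j)).

(* Main.v *)
Require Import Defs.
From HB Require Import structures.
From mathcomp Require Import all_boot all_order all_algebra.
From mathcomp Require Import zify ring lra.
Import Order.TTheory GRing.Theory Num.Theory.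
Local Open Scope ring_scope.

Definition Dv (n : nat) (x : int) : bool := (n%:Z %| x)%Z.

Lemma DvD n Y X : Dv n Y -> Dv n (X + Y) = Dv n X.
Proof. by move=> h; rewrite /Dv rpredDr. Qed.

Arguments DvD {n Y} X _.

Lemma DvN n X : Dv n (- X) = Dv n X.
Proof. by rewrite /Dv rpredN. Qed.

Lemma Dv_val n X Y c : Dv n Y -> X - Y = c -> Dv n X = Dv n c.
Proof. move=> h e. have -> : X = c + Y by rewrite -e; ring. by rewrite DvD. Qed.

Lemma Dv_eqf n X Y : Dv n Y = false -> X - Y = 0 -> Dv n X = false.
Proof. move=> h e. have -> : X = Y by lia. by []. Qed.

Lemma Dv_eqfN n X Y : Dv n Y = false -> X + Y = 0 -> Dv n X = false.
Proof. move=> h e. have -> : X = - Y by lia. by rewrite DvN. Qed.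

Lemma Dv0 n : Dv n 0 = true.
Proof. by rewrite /Dv dvdz0. Qed.

Lemma Dv_small n c : (3 <= n)%N -> -2 <= c <= 2 -> c != 0 -> Dv n c = false.
Proof.
move=> hn /andP[h1 h2] hc; apply/negbTE/negP => /dvdzP [q e].
have hn' : 3 <= n%:Z by lia.
have [h|[h|h]] : q <= -1 \/ q = 0 \/ 1 <= q by lia.
- nia.
- by move: hc; rewrite e h mul0r.
- nia.
Qed.

Lemma Dv1 n : (3 <= n)%N -> Dv n 1 = false. Proof. by move=> h; apply: Dv_small. Qed.
Lemma Dv2 n : (3 <= n)%N -> Dv n 2 = false. Proof. by move=> h; apply: Dv_small. Qed.
Lemma Dvm1 n : (3 <= n)%N -> Dv n (-1) = false. Proof. by move=> h; apply: Dv_small. Qed.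
Lemma Dvm2 n : (3 <= n)%N -> Dv n (-2) = false. Proof. by move=> h; apply: Dv_small. Qed.

Lemma DvT0 n X Y : Dv n Y -> X - Y = 0 -> Dv n X = true.
Proof. by move=> h e; rewrite (@Dv_val n X Y _ h e) Dv0. Qed.
Lemma DvF1 n X Y : (3 <= n)%N -> Dv n Y -> X - Y = 1 -> Dv n X = false.
Proof. by move=> hn h e; rewrite (@Dv_val n X Y _ h e) Dv1. Qed.
Lemma DvF2 n X Y : (3 <= n)%N -> Dv n Y -> X - Y = 2 -> Dv n X = false.
Proof. by move=> hn h e; rewrite (@Dv_val n X Y _ h e) Dv2. Qed.
Lemma DvFm1 n X Y : (3 <= n)%N -> Dv n Y -> X - Y = -1 -> Dv n X = false.
Proof. by move=> hn h e; rewrite (@Dv_val n X Y _ h e) Dvm1. Qed.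
Lemma DvFm2 n X Y : (3 <= n)%N -> Dv n Y -> X - Y = -2 -> Dv n X = false.
Proof. by move=> hn h e; rewrite (@Dv_val n X Y _ h e) Dvm2. Qed.

Lemma DvFz n X Y Z : Dv n Y -> Dv n Z = false -> X - Y - Z = 0 -> Dv n X = false.
Proof. move=> h h' e; rewrite (@Dv_val n X Y Z h) //; lia. Qed.
Lemma DvFzN n X Y Z : Dv n Y -> Dv n Z = false -> X - Y + Z = 0 -> Dv n X = false.
Proof. move=> h h' e; rewrite (@Dv_val n X Y (- Z) h) ?DvN //; lia. Qed.

Ltac evalD hn :=
  repeat (first
   [ match goal with
     | H : is_true (Dv ?n ?Y) |- context [Dv ?n ?X] =>
        first [ rewrite (@DvT0 n X Y H); last by lia
              | rewrite (@DvF1 n X Y hn H); last by lia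
              | rewrite (@DvF2 n X Y hn H); last by lia
              | rewrite (@DvFm1 n X Y hn H); last by lia
              | rewrite (@DvFm2 n X Y hn H); last by lia ]
     | H : Dv ?n ?Y = false |- context [Dv ?n ?X] =>
        first [ rewrite (@Dv_eqf n X Y H); last by lia
              | rewrite (@Dv_eqfN n X Y H); last by lia ]
     | H : is_true (Dv ?n ?Y), H' : Dv ?n ?Z = false |- context [Dv ?n ?X] =>
        first [ rewrite (@DvFz n X Y Z H H'); last by lia
              | rewrite (@DvFzN n X Y Z H H'); last by lia ]
     end ]; rewrite /=).

Lemma Dvn n : Dv n n%:Z.
Proof. by rewrite /Dv dvdzz. Qed.

Definition sw (n : nat) (a q : int) : int :=
  if Dv n (q - a) then q + 1 else if Dv n (q - a - 1) then q - 1 else q.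

Lemma resD n (i : 'I_n) (x : int) :
  ((x %% n)%Z = (i : nat)%:Z) <-> Dv n (x - (i : nat)%:Z).
Proof.
have hi : 0 <= (i:nat)%:Z < n%:Z by apply/andP; split; [lia| have := ltn_ord i; lia].
rewrite /Dv -eqz_mod_dvd.
rewrite -{1}(modz_small hi); split; [by move=> ->| by move/eqP].
Qed.

Lemma swapE n (i : 'I_n) q : swap i q = sw n (i : nat)%:Z q.
Proof.
rewrite /swap /sw.
have hi : 0 <= (i:nat)%:Z < n%:Z by apply/andP; split; [lia| have := ltn_ord i; lia].
have -> : ((q %% n)%Z == (i : nat)%:Z) = Dv n (q - (i:nat)%:Z).
  by rewrite /Dv -eqz_mod_dvd (modz_small hi).
have -> : ((q %% n)%Z == (((i : nat)%:Z + 1) %% n)%Z) = Dv n (q - (i:nat)%:Z - 1).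
  by rewrite /Dv -[q - _ - 1]addrA -opprD -eqz_mod_dvd.
by [].
Qed.

Ltac casesD n q a :=
  case: (boolP (Dv n (q - a))) => [?|/negbTE ?];
  [| case: (boolP (Dv n (q - a - 1))) => [?|/negbTE ?];
  [| case: (boolP (Dv n (q - a - 2))) => [?|/negbTE ?]]].

Lemma sw_inv n a q : (3 <= n)%N -> sw n a (sw n a q) = q.
Proof.
move=> hn; rewrite /sw; casesD n q a; evalD hn; lia.
Qed.

Lemma sw_shift n a q : sw n a (q + n%:Z) = sw n a q + n%:Z.
Proof.
rewrite /sw.
have e1 : Dv n (q + n%:Z - a) = Dv n (q - a).
  by rewrite addrAC (DvD _ (Dvn n)).
have e2 : Dv n (q + n%:Z - a - 1) = Dv n (q - a - 1).
  by rewrite (addrAC q) (addrAC (q - a)) (DvD _ (Dvn n)).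
rewrite e1 e2; case: ifP => _; [lia|case: ifP => _; lia].
Qed.

Lemma sw_congr n a b q : Dv n (a - b) -> sw n a q = sw n b q.
Proof.
move=> h; rewrite /sw.
have e1 : Dv n (q - a) = Dv n (q - b).
  by rewrite -(DvD (q - a) h); congr Dv; ring.
have e2 : Dv n (q - a - 1) = Dv n (q - b - 1).
  by rewrite -(DvD (q - a - 1) h); congr Dv; ring.
by rewrite e1 e2.
Qed.

Lemma sw_mod n a q q' : (3 <= n)%N -> Dv n (q - q') -> Dv n (sw n a q - sw n a q').
Proof.
move=> hn h; rewrite /sw.
have e1 : Dv n (q' - a) = Dv n (q - a).
  by rewrite -(DvD (q' - a) h); congr Dv; ring.
have e2 : Dv n (q' - a - 1) = Dv n (q - a - 1).
  by rewrite -(DvD (q' - a - 1) h); congr Dv; ring.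
rewrite e1 e2; case: ifP => _.
  by have -> : q + 1 - (q' + 1) = q - q' by ring.
case: ifP => _ //.
by have -> : q - 1 - (q' - 1) = q - q' by ring.
Qed.

Lemma sw_braid n a q : (3 <= n)%N ->
  sw n a (sw n (a + 1) (sw n a q)) = sw n (a + 1) (sw n a (sw n (a + 1) q)).
Proof.
move=> hn; rewrite /sw; casesD n q a; evalD hn; try lia.
Qed.

Lemma sw_comm n a b q : (3 <= n)%N -> Dv n (a - b) = false ->
  Dv n (a - b - 1) = false -> Dv n (b - a - 1) = false ->
  sw n a (sw n b q) = sw n b (sw n a q).
Proof.
move=> hn h1 h2 h3; rewrite /sw.
case: (boolP (Dv n (q - a))) => [?|/negbTE ?];
 [| case: (boolP (Dv n (q - a - 1))) => [?|/negbTE ?];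
 [| case: (boolP (Dv n (q - b))) => [?|/negbTE ?];
 [| case: (boolP (Dv n (q - b - 1))) => [?|/negbTE ?]]]];
 evalD hn; try lia.
Qed.

Lemma sw_lt n a r p : r < p -> Dv n (p - a - 1) = false -> sw n a r < p.
Proof.
move=> h1 h2; rewrite /sw; case: ifP => h3.
- case: (boolP (r + 1 == p)) => [/eqP e|/eqP ne]; last lia.
  exfalso; move: h2; rewrite -e.
  have -> : r + 1 - a - 1 = r - a by ring.
  by rewrite h3.
- case: ifP => _; lia.
Qed.

Definition aff (n : nat) (f : int -> int) : Prop :=
  [/\ forall q, f (q + n%:Z) = f q + n%:Z,
      forall q q', Dv n (f q - f q') -> Dv n (q - q')
    & forall r, exists q, Dv n (f q - r)].

Lemma aff_mulnat n f q (m : nat) : (forall q, f (q + n%:Z) = f q + n%:Z) ->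
  f (q + m%:Z * n%:Z) = f q + m%:Z * n%:Z.
Proof.
move=> h; elim: m => [|m IH]; first by rewrite !mul0r !addr0.
have -> : q + (m.+1)%:Z * n%:Z = (q + m%:Z * n%:Z) + n%:Z by lia.
rewrite h IH; lia.
Qed.

Lemma aff_mul n f q (k : int) : (forall q, f (q + n%:Z) = f q + n%:Z) ->
  f (q + k * n%:Z) = f q + k * n%:Z.
Proof.
move=> h; case: k => m; first exact: aff_mulnat.
have e := @aff_mulnat n f (q + Negz m * n%:Z) (m.+1) h.
have e2 : q + Negz m * n%:Z + (m.+1)%:Z * n%:Z = q.
  by rewrite NegzE; ring.
rewrite e2 in e; rewrite e; ring.
Qed.

Lemma DvP n x : Dv n x -> exists k, x = k * n%:Z.
Proof. by move/dvdzP. Qed.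

Lemma Dv_mul n k : Dv n (k * n%:Z).
Proof. by apply/dvdzP; exists k. Qed.

Lemma aff_sw n f a : (3 <= n)%N -> aff n f -> aff n (fun q => f (sw n a q)).
Proof.
move=> hn [h1 h2 h3]; split.
- by move=> q /=; rewrite sw_shift h1.
- move=> q q' /= /h2 h; rewrite -(sw_inv _ a q hn) -(sw_inv _ a q' hn).
  exact: sw_mod.
- move=> r; have [q hq] := h3 r; exists (sw n a q) => /=.
  by rewrite sw_inv.
Qed.

Lemma CL_ext n L t p L' t' p' (s : 'rV[int]_n) :
  (forall b, below_chamber L t p b <-> below_chamber L' t' p' b) ->
  chamber_label L t p s -> chamber_label L' t' p' s.
Proof.
move=> hb hc r; have [m [m1 m2 m3 m4]] := hc r; exists m; split => //.
- by apply/hb.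
- by move=> b /hb; apply: m3.
Qed.

Lemma CL_uniq n L t p (s1 s2 : 'rV[int]_n) :
  chamber_label L t p s1 -> chamber_label L t p s2 -> s1 = s2.
Proof.
move=> c1 c2; apply/rowP => r.
have [m [a1 a2 a3 a4]] := c1 r; have [m' [b1 b2 b3 b4]] := c2 r.
have e : m = m'.
  have := a3 _ b1 b2; have := b3 _ a1 a2; lia.
by rewrite a4 b4 e.
Qed.

Lemma CL_exists n L t p : (0 < n)%N -> aff n (L t) -> exists s : 'rV[int]_n, chamber_label L t p s.
Proof.
move=> hn [h1 h2 h3].
have hn' : 0 < n%:Z by lia.
pose qr (r : 'I_n) := xchoose (h3 (r : nat)%:Z).
have hqr : forall r, Dv n (L t (qr r) - (r : nat)%:Z).
  by move=> r; exact: (xchooseP (h3 (r : nat)%:Z)).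
pose q1 (r : 'I_n) := qr r + ((p - 1 - qr r) %/ n%:Z)%Z * n%:Z.
have hq1 : forall r, p - n%:Z <= q1 r < p.
  move=> r; have e := divz_eq (p - 1 - qr r) n%:Z.
  have g0 := @modz_ge0 (p - 1 - qr r) n%:Z ltac:(lia).
  have g1 := @ltz_pmod (p - 1 - qr r) n%:Z hn'.
  rewrite /q1; lia.
have hm : forall r, Dv n (L t (q1 r) - (r : nat)%:Z).
  move=> r; rewrite /q1 aff_mul //.
  have -> : L t (qr r) + ((p - 1 - qr r) %/ n%:Z)%Z * n%:Z - (r : nat)%:Z =
     (L t (qr r) - (r : nat)%:Z) + ((p - 1 - qr r) %/ n%:Z)%Z * n%:Z by ring.
  by rewrite (DvD _ (Dv_mul _ _)).
exists (\row_(r < n) ceil_div (L t (q1 r)) n) => r.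
exists (L t (q1 r)); split.
- by exists (q1 r); have := hq1 r; split => //; lia.
- by apply/resD.
- move=> b [q' [hq' <-]] /resD hb.
  have : Dv n (L t q' - L t (q1 r)).
    have := hm r; move: hb; rewrite /Dv => u v.
    have -> : L t q' - L t (q1 r) = (L t q' - (r:nat)%:Z) - (L t (q1 r) - (r:nat)%:Z) by ring.
    by rewrite rpredB.
  move/h2/DvP => [k hk].
  have -> : q' = q1 r + k * n%:Z by lia.
  rewrite aff_mul //.
  have hk0 : k <= 0.
    have := hq1 r; move=> hh.
    have : k * n%:Z < n%:Z by lia.
    move=> hkn; have [h|h] : k <= 0 \/ 1 <= k by lia. done. nia.
  nia.
- by rewrite mxE.
Qed.

Lemma ord_Dv n (r j : 'I_n) : Dv n ((r : nat)%:Z - (j : nat)%:Z) -> r = j.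
Proof.
move/resD; rewrite modz_small; last by apply/andP; split; [lia | have := ltn_ord r; lia].
by move=> e; apply/val_inj; case: e.
Qed.

Lemma ceil_div_sub (x : int) (n : nat) : (0 < n)%N ->
  ceil_div (x - n%:Z) n = ceil_div x n - 1.
Proof.
move=> hn; rewrite /ceil_div.
have -> : - (x - n%:Z) = - x + n%:Z by ring.
rewrite divzDr ?dvdzz // divzz.
have -> : (n%:Z != 0) = true by apply/eqP; lia.
by rewrite /=; ring.
Qed.

Lemma eE n (j r : 'I_n) : (e_ j) 0 r = (r == j)%:R.
Proof. by rewrite /e_ mxE. Qed.

Lemma CL_incr n L t p (s : 'rV[int]_n) (j : 'I_n) : aff n (L t) ->
  chamber_label L t p s -> Dv n (L t p - (j : nat)%:Z) ->
  chamber_label L t (p + 1) (s + e_ j).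
Proof.
move=> [h1 h2 h3] hc hj r.
have hn : (0 < n)%N by apply: (leq_ltn_trans _ (ltn_ord j)).
have [m [[q [hq hqm]] a2 a3 a4]] := hc r.
case: (eqVneq r j) => [erj|nrj].
- subst r.
  have hm1 : L t p - n%:Z <= m.
    apply: a3; last first.
      apply/resD; have -> : L t p - n%:Z - (j:nat)%:Z = (L t p - (j:nat)%:Z) + (-1) * n%:Z by ring.
      by rewrite (DvD _ (Dv_mul _ _)).
    exists (p - n%:Z); split; first lia.
    have := h1 (p - n%:Z); rewrite addrNK => ->; ring.
  have hm2 : m <= L t p - n%:Z.
    have : Dv n (L t q - L t p).
      move/resD: a2; rewrite -hqm /Dv => u.
      have -> : L t q - L t p = (L t q - (j:nat)%:Z) - (L t p - (j:nat)%:Z) by ring.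
      by rewrite rpredB.
    move/h2/DvP => [k hk].
    rewrite -hqm; have -> : q = p + k * n%:Z by lia.
    rewrite aff_mul //.
    have : k * n%:Z < 0 by lia.
    move=> hkn; have [h|h] : k <= -1 \/ 0 <= k by lia. nia. nia.
  have em : m = L t p - n%:Z by lia.
  exists (L t p); split.
  + by exists p; split => //; lia.
  + exact/resD.
  + move=> b [q' [hq' <-]] hb.
    case: (boolP (q' == p)) => [/eqP -> //|/eqP nq].
    have : L t q' <= m by apply: a3 => //; exists q'; split => //; lia.
    lia.
  + by rewrite mxE eE eqxx a4 em ceil_div_sub // subrK.
- exists m; split => //.
  + by exists q; split => //; lia.
  + move=> b [q' [hq' <-]] hb.
    case: (boolP (q' == p)) => [/eqP eq|/eqP nq].
    * exfalso; subst q'; move/resD: hb => hb.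
      have : Dv n ((r:nat)%:Z - (j:nat)%:Z).
        move: hb hj; rewrite /Dv => u v.
        have -> : (r:nat)%:Z - (j:nat)%:Z = (L t p - (j:nat)%:Z) - (L t p - (r:nat)%:Z) by ring.
        by rewrite rpredB.
      by move/ord_Dv => e; move: nrj; rewrite e eqxx.
    * by apply: a3 => //; exists q'; split => //; lia.
  + by rewrite mxE eE (negbTE nrj) a4 addr0.
Qed.

Definition wfun (R : fieldType) (a b t0 tab ta tb : R) := (a - b) * (t0 * tab) / (ta * tb).
Arguments wfun {R}.

Lemma scal (R : fieldType) (aX aY aZ T0 Tx Ty Tz Txy Txz Tyz Txyz : R) :
  T0 != 0 -> Tx != 0 -> Ty != 0 -> Tz != 0 -> Txy != 0 -> Txz != 0 -> Tyz != 0 -> Txyz != 0 ->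
  (aX - aY) * Tz * Txy + (aY - aZ) * Tx * Tyz + (aZ - aX) * Ty * Txz = 0 ->
  [/\ wfun aZ aX T0 Txz Tz Tx = wfun aY aX T0 Txy Ty Tx + wfun aZ aY T0 Tyz Tz Ty,
      wfun aZ aY Tx Txyz Txz Txy * wfun aZ aX T0 Txz Tz Tx
        = wfun aZ aX Ty Txyz Tyz Txy * wfun aZ aY T0 Tyz Tz Ty,
      wfun aY aX Tz Txyz Tyz Txz * wfun aZ aX T0 Txz Tz Tx
        = wfun aY aX T0 Txy Ty Tx * wfun aZ aX Ty Txyz Tyz Txy &
      wfun aZ aX Ty Txyz Tyz Txy
        = wfun aZ aY Tx Txyz Txz Txy + wfun aY aX Tz Txyz Tyz Txz].
Proof.
move=> h0 hx hy hz hxy hxz hyz hxyz E; rewrite /wfun; split.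
- apply/eqP; rewrite -subr_eq0; apply/eqP.
  have -> : (aZ - aX) * (T0 * Txz) / (Tz * Tx) -
     ((aY - aX) * (T0 * Txy) / (Ty * Tx) + (aZ - aY) * (T0 * Tyz) / (Tz * Ty)) =
     T0 / (Tx * Ty * Tz) * ((aX - aY) * Tz * Txy + (aY - aZ) * Tx * Tyz + (aZ - aX) * Ty * Txz).
    by field; rewrite ?hx ?hy ?hz ?h0 ?hxy ?hxz ?hyz ?hxyz.
  by rewrite E mulr0.
- by field; rewrite ?hx ?hy ?hz ?h0 ?hxy ?hxz ?hyz ?hxyz.
- by field; rewrite ?hx ?hy ?hz ?h0 ?hxy ?hxz ?hyz ?hxyz.
- apply/eqP; rewrite -subr_eq0; apply/eqP.
  have -> : (aZ - aX) * (Ty * Txyz) / (Tyz * Txy) -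
     ((aZ - aY) * (Tx * Txyz) / (Txz * Txy) + (aY - aX) * (Tz * Txyz) / (Tyz * Txz)) =
     Txyz / (Txy * Txz * Tyz) * ((aX - aY) * Tz * Txy + (aY - aZ) * Tx * Tyz + (aZ - aX) * Ty * Txz).
    by field; rewrite ?hx ?hy ?hz ?h0 ?hxy ?hxz ?hyz ?hxyz.
  by rewrite E mulr0.
Qed.

Lemma alg (R : fieldType) n (alpha : 'I_n -> R) (tau : 'rV[int]_n -> R)
    (X Y Z : 'I_n) (s : 'rV[int]_n) :
  X != Y -> Y != Z -> X != Z -> (forall s, tau s != 0) -> BHZ_datum alpha tau ->
  let cw := crossing_weight alpha tau in
  [/\ cw Z X s = cw Y X s + cw Z Y s,
      cw Z Y (s + e_ X) * cw Z X s = cw Z X (s + e_ Y) * cw Z Y s,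
      cw Y X (s + e_ Z) * cw Z X s = cw Y X s * cw Z X (s + e_ Y) &
      cw Z X (s + e_ Y) = cw Z Y (s + e_ X) + cw Y X (s + e_ Z)].
Proof.
move=> hxy hyz hxz ht hb cw.
have v1 : s + e_ Z + e_ X = s + e_ X + e_ Z by rewrite addrAC.
have v2 : s + e_ Y + e_ X = s + e_ X + e_ Y by rewrite addrAC.
have v3 : s + e_ Z + e_ Y = s + e_ Y + e_ Z by rewrite addrAC.
have v4 : s + e_ X + e_ Z + e_ Y = s + e_ X + e_ Y + e_ Z by rewrite addrAC.
have v5 : s + e_ Y + e_ Z + e_ X = s + e_ X + e_ Y + e_ Z by rewrite addrAC (addrAC s).
have v6 : s + e_ Z + e_ Y + e_ X = s + e_ X + e_ Y + e_ Z
  by rewrite addrAC (addrAC s) addrAC.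
have := @scal R (alpha X) (alpha Y) (alpha Z) (tau s) (tau (s + e_ X)) (tau (s + e_ Y))
  (tau (s + e_ Z)) (tau (s + e_ X + e_ Y)) (tau (s + e_ X + e_ Z)) (tau (s + e_ Y + e_ Z))
  (tau (s + e_ X + e_ Y + e_ Z)) (ht _) (ht _) (ht _) (ht _) (ht _) (ht _) (ht _) (ht _)
  (hb s X Y Z hxy hyz hxz).
rewrite /cw /crossing_weight /wfun.
by rewrite ?v6 ?v5 ?v4 ?v1 ?v2 ?v3 ?v4 ?v5.
Qed.

Lemma cons_sw (R : Type) n (E : diagram R n) t q : consistent E ->
  lab E (t + 1) q = lab E t (sw n (word E t : nat)%:Z q).
Proof. by move=> c; rewrite c swapE. Qed.

Lemma aff_ext n (f g : int -> int) : (forall q, f q = g q) -> aff n f -> aff n g.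
Proof.
move=> e [h1 h2 h3]; split.
- by move=> q; rewrite -!e.
- by move=> q q'; rewrite -!e; apply: h2.
- by move=> r; have [q hq] := h3 r; exists q; rewrite -e.
Qed.

Lemma aff_id n : aff n id.
Proof. by split => // r; exists r; rewrite subrr /Dv dvdz0. Qed.

Lemma aff_all (R : Type) n (E : diagram R n) t0 : (3 <= n)%N -> consistent E ->
  aff n (lab E t0) -> forall t, aff n (lab E t).
Proof.
move=> hn c h0.
have fw : forall t, aff n (lab E t) -> aff n (lab E (t + 1)).
  move=> t h; apply: (@aff_ext n (fun q => lab E t (sw n (word E t : nat)%:Z q))).
    by move=> q; rewrite cons_sw.
  exact: aff_sw.
have bw : forall t, aff n (lab E (t + 1)) -> aff n (lab E t).
  move=> t h; apply: (@aff_ext n (fun q => lab E (t + 1) (sw n (word E t : nat)%:Z q))).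
    by move=> q; rewrite cons_sw // sw_inv.
  exact: aff_sw.
have fwm : forall m : nat, aff n (lab E (t0 + m%:Z)).
  elim=> [|m IH]; first by rewrite addr0.
  have -> : t0 + (m.+1)%:Z = t0 + m%:Z + 1 by lia.
  exact: fw.
have bwm : forall m : nat, aff n (lab E (t0 - m%:Z)).
  elim=> [|m IH]; first by rewrite subr0.
  apply: bw; have -> : t0 - (m.+1)%:Z + 1 = t0 - m%:Z by lia.
  exact: IH.
move=> t; case: (lerP t0 t) => h.
- have -> : t = t0 + (absz (t - t0))%:Z by lia.
  exact: fwm.
- have -> : t = t0 - (absz (t0 - t))%:Z by lia.
  exact: bwm.
Qed.

Lemma below_sw n L t (a : int) p : (3 <= n)%N ->
  (forall q, L (t + 1) q = L t (sw n a q)) -> Dv n (p - a - 1) = false ->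
  forall b, below_chamber L (t + 1) p b <-> below_chamber L t p b.
Proof.
move=> hn hL hp b; split.
- move=> [q [hq <-]]; exists (sw n a q); split; last by rewrite hL.
  exact: sw_lt.
- move=> [q [hq <-]]; exists (sw n a q); split; last by rewrite hL sw_inv.
  exact: sw_lt.
Qed.

Arguments below_sw {n L t a p}.

Lemma CL_sw n L t (a : int) p (s : 'rV[int]_n) : (3 <= n)%N ->
  (forall q, L (t + 1) q = L t (sw n a q)) -> Dv n (p - a - 1) = false ->
  chamber_label L t p s -> chamber_label L (t + 1) p s.
Proof.
move=> hn hL hp; apply: CL_ext => b; rewrite (below_sw hn hL hp); split => //.
Qed.

Arguments CL_sw {n L t a p s}.

Lemma ex_res n x : (0 < n)%N -> exists i : 'I_n, Dv n (x - (i : nat)%:Z).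
Proof.
move=> hn.
have hn' : n%:Z != 0 by apply/eqP; lia.
have g0 := @modz_ge0 x n%:Z hn'.
have g1 := @ltz_pmod x n%:Z ltac:(lia).
have lt : (absz (x %% n%:Z)%Z < n)%N by lia.
exists (Ordinal lt) => /=.
have -> : (absz (x %% n%:Z)%Z)%:Z = (x %% n%:Z)%Z by lia.
have e := divz_eq x n%:Z.
have -> : x - (x %% n%:Z)%Z = (x %/ n%:Z)%Z * n%:Z by lia.
exact: Dv_mul.
Qed.

Lemma res_uniq n x (i j : 'I_n) : Dv n (x - (i:nat)%:Z) -> Dv n (x - (j:nat)%:Z) -> i = j.
Proof.
move=> h1 h2; apply: ord_Dv.
have -> : (i:nat)%:Z - (j:nat)%:Z = (x - (j:nat)%:Z) - (x - (i:nat)%:Z) by ring.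
by move: h1 h2; rewrite /Dv => u v; rewrite rpredB.
Qed.

Lemma DvB n x y : Dv n x -> Dv n y -> Dv n (x - y).
Proof. by rewrite /Dv => u v; rewrite rpredB. Qed.

Lemma DvDD n x y : Dv n x -> Dv n y -> Dv n (x + y).
Proof. by rewrite /Dv => u v; rewrite rpredD. Qed.

Lemma Dv_eq n x y : x = y -> Dv n x -> Dv n y.
Proof. by move=> ->. Qed.

Ltac swev hn := rewrite /sw; evalD hn; try lia.

Lemma geomA (R : Type) n (F : diagram R n) k (c d : 'I_n) q (s0 : 'rV[int]_n) (Y : 'I_n) :
  (3 <= n)%N -> consistent F -> (forall t, aff n (lab F t)) ->
  word F k = c -> word F (k + 1) = d -> Dv n ((d:nat)%:Z - (c:nat)%:Z - 1) ->
  Dv n (q - (c:nat)%:Z) -> chamber_label (lab F) k q s0 ->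
  Dv n (lab F k (q + 1) - (Y:nat)%:Z) ->
  chamber_label (lab F) (k + 1) (q + 1) (s0 + e_ Y) /\
      lab F (k + 1) (q + 1 + 1) = lab F k (q + 2) /\
      lab F (k + 1) (q + 1) = lab F k q /\
      chamber_label (lab F) (k + 2) q s0 /\
      lab F (k + 2) (q + 1) = lab F k (q + 2) /\
      lab F (k + 2) q = lab F k (q + 1).
Proof.
move=> hn cF aF hc hd hadj hq hs hY.
have hadj' : Dv n ((d:nat)%:Z - ((c:nat)%:Z + 1)).
  by apply: (@Dv_eq n _ _ _ hadj); ring.
have h1 : forall r, lab F (k + 1) r = lab F k (sw n (c:nat)%:Z r).
  by move=> r; rewrite cons_sw // hc.
have h2 : forall r, lab F (k + 1 + 1) r = lab F (k + 1) (sw n ((c:nat)%:Z + 1) r).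
  by move=> r; rewrite cons_sw // hd (@sw_congr n _ _ _ hadj').
have ek : k + 2 = k + 1 + 1 by ring.
have s1 : sw n (c:nat)%:Z (q + 1 + 1) = q + 2 by swev hn.
have s2 : sw n (c:nat)%:Z (q + 1) = q by swev hn.
have s3 : sw n (c:nat)%:Z q = q + 1 by swev hn.
have s4 : sw n ((c:nat)%:Z + 1) (q + 1) = q + 1 + 1 by swev hn.
have s5 : sw n ((c:nat)%:Z + 1) q = q by swev hn.
have f1 : Dv n (q - (c:nat)%:Z - 1) = false by evalD hn.
have f2 : Dv n (q - ((c:nat)%:Z + 1) - 1) = false by evalD hn.
have cl1 : chamber_label (lab F) (k + 1) q s0 by apply: (CL_sw hn h1 f1).
rewrite ek; split; [|split; [|split; [|split; [|split]]]].
- apply: CL_incr => //; by rewrite h1 s3.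
- by rewrite h1 s1.
- by rewrite h1 s2.
- exact: (CL_sw hn h2 f2).
- by rewrite h2 s4 h1 s1.
- by rewrite h2 s5 h1 s3.
Qed.

Lemma geomB (R : Type) n (F : diagram R n) k (c d : 'I_n) q (s0 : 'rV[int]_n) (X Z : 'I_n) :
  (3 <= n)%N -> consistent F -> (forall t, aff n (lab F t)) ->
  word F k = d -> word F (k + 1) = c -> Dv n ((d:nat)%:Z - (c:nat)%:Z - 1) ->
  Dv n (q - (c:nat)%:Z) -> chamber_label (lab F) k q s0 ->
  Dv n (lab F k q - (X:nat)%:Z) -> Dv n (lab F k (q + 2) - (Z:nat)%:Z) ->
  chamber_label (lab F) k (q + 1) (s0 + e_ X) /\
      chamber_label (lab F) (k + 1) q s0 /\
      lab F (k + 1) (q + 1) = lab F k (q + 2) /\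
      lab F (k + 1) q = lab F k q /\
      chamber_label (lab F) (k + 2) (q + 1) (s0 + e_ Z) /\
      lab F (k + 2) (q + 1 + 1) = lab F k (q + 1) /\
      lab F (k + 2) (q + 1) = lab F k q.
Proof.
move=> hn cF aF hd hc hadj hq hs hX hZ.
have hadj' : Dv n ((d:nat)%:Z - ((c:nat)%:Z + 1)).
  by apply: (@Dv_eq n _ _ _ hadj); ring.
have h1 : forall r, lab F (k + 1) r = lab F k (sw n ((c:nat)%:Z + 1) r).
  by move=> r; rewrite cons_sw // hd (@sw_congr n _ _ _ hadj').
have h2 : forall r, lab F (k + 1 + 1) r = lab F (k + 1) (sw n (c:nat)%:Z r).
  by move=> r; rewrite cons_sw // hc.
have ek : k + 2 = k + 1 + 1 by ring.
have s1 : sw n ((c:nat)%:Z + 1) (q + 1) = q + 2 by swev hn.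
have s2 : sw n ((c:nat)%:Z + 1) q = q by swev hn.
have s3 : sw n (c:nat)%:Z (q + 1 + 1) = q + 1 + 1 by swev hn.
have s4 : sw n ((c:nat)%:Z + 1) (q + 1 + 1) = q + 1 by swev hn.
have s5 : sw n (c:nat)%:Z (q + 1) = q by swev hn.
have s6 : sw n (c:nat)%:Z q = q + 1 by swev hn.
have f1 : Dv n (q - (c:nat)%:Z - 1) = false by evalD hn.
have f2 : Dv n (q - ((c:nat)%:Z + 1) - 1) = false by evalD hn.
have cl1 : chamber_label (lab F) (k + 1) q s0 by apply: (CL_sw hn h1 f2).
have cl2 : chamber_label (lab F) (k + 1 + 1) q s0 by apply: (CL_sw hn h2 f1).
rewrite ek; split; [|split; [|split; [|split; [|split; [|split]]]]] => //.
- exact: CL_incr.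
- by rewrite h1 s1.
- by rewrite h1 s2.
- apply: CL_incr => //; by rewrite h2 s6 h1 s1.
- by rewrite h2 s3 h1 s4.
- by rewrite h2 s5 h1 s2.
Qed.

Definition Inv (R : fieldType) n (alpha : 'I_n -> R) (tau : 'rV[int]_n -> R)
  (E : diagram R n) : Prop :=
  forall t p, Dv n (p - (word E t : nat)%:Z) -> forall i j : 'I_n,
    Dv n (lab E t (p + 1) - (i:nat)%:Z) -> Dv n (lab E t p - (j:nat)%:Z) ->
    forall s, chamber_label (lab E) t p s -> wt E t = crossing_weight alpha tau i j s.

Arguments Inv {R n}.
Arguments alg {R n alpha tau X Y Z s}.
Arguments CL_exists {n L t} p.
Arguments ex_res {n} x.
Arguments geomA {R n F k c d q s0 Y}.
Arguments geomB {R n F k c d q s0 X Z}.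
Arguments CL_ext {n L t p L' t' p' s}.
Arguments res_uniq {n x i j}.
Arguments CL_uniq {n L t p s1 s2}.

Lemma DvCm1 n X : (3 <= n)%N -> X = -1 -> Dv n X = false.
Proof. by move=> hn ->; rewrite Dvm1. Qed.
Lemma DvCm2 n X : (3 <= n)%N -> X = -2 -> Dv n X = false.
Proof. by move=> hn ->; rewrite Dvm2. Qed.

Lemma res_neq n f a b (I J : 'I_n) : (3 <= n)%N -> aff n f ->
  Dv n (f a - (I:nat)%:Z) -> Dv n (f b - (J:nat)%:Z) -> Dv n (a - b) = false -> I != J.
Proof.
move=> hn [_ h2 _] ha hb hab; apply/eqP => e; subst J.
have : Dv n (f a - f b).
  by apply: (@Dv_eq n ((f a - (I:nat)%:Z) - (f b - (I:nat)%:Z))); [ring|apply: DvB].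
by move/h2; rewrite hab.
Qed.

Arguments res_neq {n f a b I J}.

Lemma braidA (R : realFieldType) n (alpha : 'I_n -> R) tau (E E' : diagram R n) k (u v : 'I_n) q :
  (3 <= n)%N -> (forall s, tau s != 0) -> BHZ_datum alpha tau ->
  consistent E -> consistent E' -> (forall t, aff n (lab E t)) -> (forall t, aff n (lab E' t)) ->
  Inv alpha tau E ->
  word E k = u -> word E (k + 1) = v -> word E (k + 2) = u -> word E' k = v -> word E' (k + 1) = u ->
  Dv n ((v:nat)%:Z - (u:nat)%:Z - 1) -> (forall r, lab E' k r = lab E k r) ->
  wt E k + wt E (k + 2) != 0 -> Dv n (q - (u:nat)%:Z) ->
  [/\ forall (i j : 'I_n) s, Dv n (lab E' k (q + 1 + 1) - (i:nat)%:Z) ->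
        Dv n (lab E' k (q + 1) - (j:nat)%:Z) -> chamber_label (lab E') k (q + 1) s ->
        wt E (k + 1) * wt E (k + 2) / (wt E k + wt E (k + 2)) = crossing_weight alpha tau i j s,
      forall (i j : 'I_n) s, Dv n (lab E' (k + 1) (q + 1) - (i:nat)%:Z) ->
        Dv n (lab E' (k + 1) q - (j:nat)%:Z) -> chamber_label (lab E') (k + 1) q s ->
        wt E k + wt E (k + 2) = crossing_weight alpha tau i j s &
      forall (i j : 'I_n) s, Dv n (lab E' (k + 2) (q + 1 + 1) - (i:nat)%:Z) ->
        Dv n (lab E' (k + 2) (q + 1) - (j:nat)%:Z) -> chamber_label (lab E') (k + 2) (q + 1) s ->
        wt E k * wt E (k + 1) / (wt E k + wt E (k + 2)) = crossing_weight alpha tau i j s].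
Proof.
move=> hn ht hb cE cE' aE aE' IE hu hv hu2 hv' hu' hadj hlab nz hq.
have hn0 : (0 < n)%N by lia.
have [s0 hs0] := CL_exists q hn0 (aE k).
have [X hX] := ex_res (lab E k q) hn0.
have [Y hY] := ex_res (lab E k (q + 1)) hn0.
have [Z hZ] := ex_res (lab E k (q + 2)) hn0.
have nXY : X != Y by apply: (res_neq hn (aE k) hX hY); apply: DvCm1 => //; ring.
have nYZ : Y != Z by apply: (res_neq hn (aE k) hY hZ); apply: DvCm1 => //; ring.
have nXZ : X != Z by apply: (res_neq hn (aE k) hX hZ); apply: DvCm2 => //; ring.
have [A1 A2 A3 A4] := @alg R n alpha tau X Y Z s0 nXY nYZ nXZ ht hb.
have [g1 [g2 [g3 [g4 [g5 g6]]]]] := geomA hn cE aE hu hv hadj hq hs0 hY.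
have hs0' : chamber_label (lab E') k q s0.
  by apply: (CL_ext _ hs0) => b; split; move=> [r [h1 h2]]; exists r; rewrite ?hlab in h2 *.
have hX' : Dv n (lab E' k q - (X:nat)%:Z) by rewrite hlab.
have hZ' : Dv n (lab E' k (q + 2) - (Z:nat)%:Z) by rewrite hlab.
have [b1 [b2 [b3 [b4 [b5 [b6 b7]]]]]] := geomB hn cE' aE' hv' hu' hadj hq hs0' hX' hZ'.
have wa : wt E k = crossing_weight alpha tau Y X s0.
  by apply: (IE k q) => //; rewrite hu.
have wb : wt E (k + 1) = crossing_weight alpha tau Z X (s0 + e_ Y).
  apply: (IE (k + 1) (q + 1)) => //; last by rewrite g3.
  - rewrite hv; apply: (@Dv_eq n ((q - (u:nat)%:Z) - ((v:nat)%:Z - (u:nat)%:Z - 1))); [ring|exact: DvB].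
  - by rewrite g2.
have wc : wt E (k + 2) = crossing_weight alpha tau Z Y s0.
  apply: (IE (k + 2) q) => //; first by rewrite hu2.
  - by rewrite g5.
  - by rewrite g6.
have nz' : crossing_weight alpha tau Z X s0 != 0 by rewrite A1 -wa -wc.
split.
- move=> i j s hi hj hs.
  have e2 : q + 1 + 1 = q + 2 by ring.
  rewrite hlab e2 in hi; rewrite hlab in hj.
  have -> : i = Z by apply: (res_uniq hi).
  have -> : j = Y by apply: (res_uniq hj).
  have -> : s = s0 + e_ X by apply: (CL_uniq hs b1).
  by rewrite wb wc wa -A1 -A2 mulfK.
- move=> i j s hi hj hs.
  rewrite b3 hlab in hi; rewrite b4 hlab in hj.
  have -> : i = Z by apply: (res_uniq hi).
  have -> : j = X by apply: (res_uniq hj).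
  have -> : s = s0 by apply: (CL_uniq hs b2).
  by rewrite wa wc -A1.
- move=> i j s hi hj hs.
  rewrite b6 hlab in hi; rewrite b7 hlab in hj.
  have -> : i = Y by apply: (res_uniq hi).
  have -> : j = X by apply: (res_uniq hj).
  have -> : s = s0 + e_ Z by apply: (CL_uniq hs b5).
  by rewrite wa wb wc -A1 -A3 mulfK.
Qed.

Lemma braidB (R : realFieldType) n (alpha : 'I_n -> R) tau (E E' : diagram R n) k (u v : 'I_n) q :
  (3 <= n)%N -> (forall s, tau s != 0) -> BHZ_datum alpha tau ->
  consistent E -> consistent E' -> (forall t, aff n (lab E t)) -> (forall t, aff n (lab E' t)) ->
  Inv alpha tau E ->
  word E k = u -> word E (k + 1) = v -> word E (k + 2) = u -> word E' k = v -> word E' (k + 1) = u ->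
  Dv n ((u:nat)%:Z - (v:nat)%:Z - 1) -> (forall r, lab E' k r = lab E k r) ->
  wt E k + wt E (k + 2) != 0 -> Dv n (q - (v:nat)%:Z) ->
  [/\ forall (i j : 'I_n) s, Dv n (lab E' k (q + 1) - (i:nat)%:Z) ->
        Dv n (lab E' k q - (j:nat)%:Z) -> chamber_label (lab E') k q s ->
        wt E (k + 1) * wt E (k + 2) / (wt E k + wt E (k + 2)) = crossing_weight alpha tau i j s,
      forall (i j : 'I_n) s, Dv n (lab E' (k + 1) (q + 1 + 1) - (i:nat)%:Z) ->
        Dv n (lab E' (k + 1) (q + 1) - (j:nat)%:Z) -> chamber_label (lab E') (k + 1) (q + 1) s ->
        wt E k + wt E (k + 2) = crossing_weight alpha tau i j s &
      forall (i j : 'I_n) s, Dv n (lab E' (k + 2) (q + 1) - (i:nat)%:Z) ->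
        Dv n (lab E' (k + 2) q - (j:nat)%:Z) -> chamber_label (lab E') (k + 2) q s ->
        wt E k * wt E (k + 1) / (wt E k + wt E (k + 2)) = crossing_weight alpha tau i j s].
Proof.
move=> hn ht hb cE cE' aE aE' IE hu hv hu2 hv' hu' hadj hlab nz hq.
have hn0 : (0 < n)%N by lia.
have [s0 hs0] := CL_exists q hn0 (aE k).
have [X hX] := ex_res (lab E k q) hn0.
have [Y hY] := ex_res (lab E k (q + 1)) hn0.
have [Z hZ] := ex_res (lab E k (q + 2)) hn0.
have nXY : X != Y by apply: (res_neq hn (aE k) hX hY); apply: DvCm1 => //; ring.
have nYZ : Y != Z by apply: (res_neq hn (aE k) hY hZ); apply: DvCm1 => //; ring.
have nXZ : X != Z by apply: (res_neq hn (aE k) hX hZ); apply: DvCm2 => //; ring.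
have [A1 A2 A3 A4] := @alg R n alpha tau X Y Z s0 nXY nYZ nXZ ht hb.
have [g1 [g2 [g3 [g4 [g5 [g6 g7]]]]]] := geomB hn cE aE hu hv hadj hq hs0 hX hZ.
have hs0' : chamber_label (lab E') k q s0.
  by apply: (CL_ext _ hs0) => b; split; move=> [r [h1 h2]]; exists r; rewrite ?hlab in h2 *.
have hY' : Dv n (lab E' k (q + 1) - (Y:nat)%:Z) by rewrite hlab.
have [b1 [b2 [b3 [b4 [b5 b6]]]]] := geomA hn cE' aE' hv' hu' hadj hq hs0' hY'.
have e2 : q + 1 + 1 = q + 2 by ring.
have hq1 : Dv n (q + 1 - (u:nat)%:Z).
  by apply: (@Dv_eq n ((q - (v:nat)%:Z) - ((u:nat)%:Z - (v:nat)%:Z - 1))); [ring|exact: DvB].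
have wa : wt E k = crossing_weight alpha tau Z Y (s0 + e_ X).
  apply: (IE k (q + 1)) => //; first by rewrite hu.
  by rewrite e2.
have wb : wt E (k + 1) = crossing_weight alpha tau Z X s0.
  apply: (IE (k + 1) q) => //; first by rewrite hv.
  - by rewrite g3.
  - by rewrite g4.
have wc : wt E (k + 2) = crossing_weight alpha tau Y X (s0 + e_ Z).
  apply: (IE (k + 2) (q + 1)) => //; first by rewrite hu2.
  - by rewrite g6.
  - by rewrite g7.
have nz' : crossing_weight alpha tau Z X (s0 + e_ Y) != 0 by rewrite A4 -wa -wc.
split.
- move=> i j s hi hj hs.
  rewrite hlab in hi; rewrite hlab in hj.
  have -> : i = Y by apply: (res_uniq hi).
  have -> : j = X by apply: (res_uniq hj).
  have -> : s = s0 by apply: (CL_uniq hs hs0').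
  by rewrite wa wb wc -A4 (mulrC (crossing_weight _ _ Z X s0)) A3 mulfK.
- move=> i j s hi hj hs.
  rewrite b2 hlab in hi; rewrite b3 hlab in hj.
  have -> : i = Z by apply: (res_uniq hi).
  have -> : j = X by apply: (res_uniq hj).
  have -> : s = s0 + e_ Y by apply: (CL_uniq hs b1).
  by rewrite wa wc -A4.
- move=> i j s hi hj hs.
  rewrite b5 hlab in hi; rewrite b6 hlab in hj.
  have -> : i = Z by apply: (res_uniq hi).
  have -> : j = Y by apply: (res_uniq hj).
  have -> : s = s0 by apply: (CL_uniq hs b4).
  by rewrite wa wb wc -A4 A2 (mulrC (crossing_weight _ _ _ _ (s0 + e_ Y))) mulfK.
Qed.

Arguments braidA {R n alpha tau E E' k u v q}.
Arguments braidB {R n alpha tau E E' k u v q}.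

Lemma agree_from (R : Type) n (E E' : diagram R n) t1 : consistent E -> consistent E' ->
  (forall q, lab E' t1 q = lab E t1 q) -> (forall t, t1 <= t -> word E' t = word E t) ->
  forall t, t1 <= t -> forall q, lab E' t q = lab E t q.
Proof.
move=> cE cE' h0 hw.
have hm : forall m : nat, forall q, lab E' (t1 + m%:Z) q = lab E (t1 + m%:Z) q.
  elim=> [|m IH] q; first by rewrite addr0.
  have -> : t1 + (m.+1)%:Z = t1 + m%:Z + 1 by lia.
  rewrite cE' cE IH hw //; lia.
move=> t ht q; have -> : t = t1 + (absz (t - t1))%:Z by lia.
exact: hm.
Qed.

Lemma Inv_at (R : fieldType) n (alpha : 'I_n -> R) tau (E E' : diagram R n) t :
  Inv alpha tau E -> word E' t = word E t -> wt E' t = wt E t ->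
  (forall q, lab E' t q = lab E t q) ->
  forall p, Dv n (p - (word E' t : nat)%:Z) -> forall i j : 'I_n,
    Dv n (lab E' t (p + 1) - (i:nat)%:Z) -> Dv n (lab E' t p - (j:nat)%:Z) ->
    forall s, chamber_label (lab E') t p s -> wt E' t = crossing_weight alpha tau i j s.
Proof.
move=> IE hw hwt hl p hp i j hi hj s hs.
rewrite hwt; apply: (IE t p).
- by rewrite -hw.
- by rewrite -hl.
- by rewrite -hl.
- by apply: (CL_ext _ hs) => b; split; move=> [r [h1 h2]]; exists r; rewrite ?hl in h2 *.
Qed.

Arguments Inv_at {R n alpha tau E E' t}.

Lemma mod1D n x : (2 <= n)%N -> (x %% n)%Z = 1 -> Dv n (x - 1).
Proof.
move=> hn h; rewrite /Dv -eqz_mod_dvd; apply/eqP; rewrite h modz_small //; apply/andP; split; lia.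
Qed.

Lemma Dmod1 n x : (2 <= n)%N -> Dv n (x - 1) -> (x %% n)%Z = 1.
Proof.
move=> hn; rewrite /Dv -eqz_mod_dvd => /eqP ->; rewrite modz_small //; apply/andP; split; lia.
Qed.

Lemma braid_pres (R : realFieldType) n (alpha : 'I_n -> R) tau (E E' : diagram R n) k :
  (3 <= n)%N -> (forall s, tau s != 0) -> BHZ_datum alpha tau ->
  consistent E -> (forall t, aff n (lab E t)) -> Inv alpha tau E -> braid_move k E E' ->
  consistent E' /\ (forall t, aff n (lab E' t)) /\ Inv alpha tau E'.
Proof.
move=> hn ht hb cE aE IE [[w2 adj nz] [[w'0 w'1 w'2] [[wt0 wt1 wt2] [oth [cE' hle]]]]].
set u := word E k in w2 adj nz w'1 wt0 wt1 wt2 oth.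
set v := word E (k + 1) in adj w'0 w'2 wt0 wt1 wt2 oth.
have hlabk : forall r, lab E' k r = lab E k r by move=> r; apply: hle.
have aE' : forall t, aff n (lab E' t).
  apply: (@aff_all _ n E' k hn cE'); apply: (@aff_ext n (lab E k)) => // q; by rewrite hlabk.
split => //; split => //.
have hn2 : (2 <= n)%N by lia.
have ek2 : k + 2 = k + 1 + 1 by ring.
have ek3 : k + 3 = k + 2 + 1 by ring.
have l1 : forall r, lab E' (k + 1) r = lab E k (sw n (v:nat)%:Z r).
  by move=> r; rewrite cons_sw // w'0 hlabk.
have l2 : forall r, lab E' (k + 2) r = lab E' (k + 1) (sw n (u:nat)%:Z r).
  by move=> r; rewrite ek2 cons_sw // w'1.
have l3 : forall r, lab E' (k + 3) r = lab E' (k + 2) (sw n (v:nat)%:Z r).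
  by move=> r; rewrite ek3 cons_sw // w'2.
have m1 : forall r, lab E (k + 1) r = lab E k (sw n (u:nat)%:Z r).
  by move=> r; rewrite cons_sw.
have m2 : forall r, lab E (k + 2) r = lab E (k + 1) (sw n (v:nat)%:Z r).
  by move=> r; rewrite ek2 cons_sw.
have m3 : forall r, lab E (k + 3) r = lab E (k + 2) (sw n (u:nat)%:Z r).
  by move=> r; rewrite ek3 cons_sw // w2.
have adj' : Dv n ((v:nat)%:Z - (u:nat)%:Z - 1) \/ Dv n ((u:nat)%:Z - (v:nat)%:Z - 1).
  by case: adj => h; [right|left]; apply: mod1D.
have hfar : forall t, k + 3 <= t -> forall q, lab E' t q = lab E t q.
  apply: agree_from => //.
  - move=> q; rewrite l3 l2 l1 m3 m2 m1; congr (lab E k _).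
    case: adj' => h.
    + have sv : forall r, sw n (v:nat)%:Z r = sw n ((u:nat)%:Z + 1) r.
        by move=> r; apply: sw_congr; apply: (@Dv_eq n _ _ _ h); ring.
      by rewrite !sv sw_braid.
    + have su : forall r, sw n (u:nat)%:Z r = sw n ((v:nat)%:Z + 1) r.
        by move=> r; apply: sw_congr; apply: (@Dv_eq n _ _ _ h); ring.
      by rewrite !su sw_braid.
  - move=> t ht3; have [] := oth t; try (apply/eqP; lia); done.
move=> t.
case: (ltrP t k) => htk.
  have [ow owt] : word E' t = word E t /\ wt E' t = wt E t by apply: oth; apply/eqP; lia.
  apply: (Inv_at IE ow owt) => q; apply: hle; lia.
have : t = k \/ t = k + 1 \/ t = k + 2 \/ k + 3 <= t by lia.
case=> [->|[->|[->|ht3]]]; last first.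
  have [ow owt] : word E' t = word E t /\ wt E' t = wt E t by apply: oth; apply/eqP; lia.
  by apply: (Inv_at IE ow owt) => q; apply: hfar.
-
  rewrite w'2 wt2 => p hp i j hi hj s hs.
  case: adj' => h.
  + have hq : Dv n (p - 1 - (u:nat)%:Z).
      by apply: (@Dv_eq n ((p - (v:nat)%:Z) + ((v:nat)%:Z - (u:nat)%:Z - 1))); [ring|apply: DvDD].
    have [_ _ c3] := braidA hn ht hb cE cE' aE aE' IE erefl erefl w2 w'0 w'1 h hlabk nz hq.
    have ep : p = p - 1 + 1 by ring.
    rewrite ep in hi hj hs; apply: c3 => //.
  + have [_ _ c3] := braidB hn ht hb cE cE' aE aE' IE erefl erefl w2 w'0 w'1 h hlabk nz hp.
    exact: c3.
-
  rewrite w'1 wt1 => p hp i j hi hj s hs.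
  case: adj' => h.
  + have [_ c2 _] := braidA hn ht hb cE cE' aE aE' IE erefl erefl w2 w'0 w'1 h hlabk nz hp.
    exact: c2.
  + have hq : Dv n (p - 1 - (v:nat)%:Z).
      by apply: (@Dv_eq n ((p - (u:nat)%:Z) + ((u:nat)%:Z - (v:nat)%:Z - 1))); [ring|apply: DvDD].
    have [_ c2 _] := braidB hn ht hb cE cE' aE aE' IE erefl erefl w2 w'0 w'1 h hlabk nz hq.
    have ep : p = p - 1 + 1 by ring.
    rewrite ep in hi hj hs; apply: c2 => //.
-
  rewrite w'0 wt0 => p hp i j hi hj s hs.
  case: adj' => h.
  + have hq : Dv n (p - 1 - (u:nat)%:Z).
      by apply: (@Dv_eq n ((p - (v:nat)%:Z) + ((v:nat)%:Z - (u:nat)%:Z - 1))); [ring|apply: DvDD].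
    have [c1 _ _] := braidA hn ht hb cE cE' aE aE' IE erefl erefl w2 w'0 w'1 h hlabk nz hq.
    have ep : p = p - 1 + 1 by ring.
    rewrite ep in hi hj hs; apply: c1 => //.
  + have [c1 _ _] := braidB hn ht hb cE cE' aE aE' IE erefl erefl w2 w'0 w'1 h hlabk nz hp.
    exact: c1.
Qed.

Lemma sw_fix_dist n (a b p : int) : (3 <= n)%N -> Dv n (p - b) ->
  Dv n (a - b) = false -> Dv n (a - b - 1) = false -> Dv n (b - a - 1) = false ->
  [/\ sw n a p = p, sw n a (p + 1) = p + 1 & Dv n (p - a - 1) = false].
Proof.
move=> hn hp h1 h2 h3; split.
- by swev hn.
- by swev hn.
- by evalD hn.
Qed.

Lemma comm_pres (R : realFieldType) n (alpha : 'I_n -> R) tau (E E' : diagram R n) k :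
  (3 <= n)%N -> consistent E -> (forall t, aff n (lab E t)) -> Inv alpha tau E -> comm_move k E E' ->
  consistent E' /\ (forall t, aff n (lab E' t)) /\ Inv alpha tau E'.
Proof.
move=> hn cE aE IE [[neq nadj] [[w'0 w'1] [[wt0 wt1] [oth [cE' hle]]]]].
set u := word E k in neq nadj w'1 wt1 oth.
set v := word E (k + 1) in neq nadj w'0 wt0 oth.
have hlabk : forall r, lab E' k r = lab E k r by move=> r; apply: hle.
have aE' : forall t, aff n (lab E' t).
  apply: (@aff_all _ n E' k hn cE'); apply: (@aff_ext n (lab E k)) => // q; by rewrite hlabk.
split => //; split => //.
have hn2 : (2 <= n)%N by lia.
have f1 : Dv n ((u:nat)%:Z - (v:nat)%:Z) = false.
  by apply/negbTE/negP => /ord_Dv e; apply: neq.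
have f2 : Dv n ((u:nat)%:Z - (v:nat)%:Z - 1) = false.
  by apply/negbTE/negP => /(@Dmod1 n _ hn2) e; apply: nadj; left.
have f3 : Dv n ((v:nat)%:Z - (u:nat)%:Z - 1) = false.
  by apply/negbTE/negP => /(@Dmod1 n _ hn2) e; apply: nadj; right.
have ek2 : k + 2 = k + 1 + 1 by ring.
have l1 : forall r, lab E' (k + 1) r = lab E k (sw n (v:nat)%:Z r).
  by move=> r; rewrite cons_sw // w'0 hlabk.
have l2 : forall r, lab E' (k + 2) r = lab E' (k + 1) (sw n (u:nat)%:Z r).
  by move=> r; rewrite ek2 cons_sw // w'1.
have m1 : forall r, lab E (k + 1) r = lab E k (sw n (u:nat)%:Z r).
  by move=> r; rewrite cons_sw.
have m2 : forall r, lab E (k + 2) r = lab E (k + 1) (sw n (v:nat)%:Z r).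
  by move=> r; rewrite ek2 cons_sw.
have hfar : forall t, k + 2 <= t -> forall q, lab E' t q = lab E t q.
  apply: agree_from => //.
  - move=> q; rewrite l2 l1 m2 m1; congr (lab E k _).
    by rewrite (@sw_comm n _ _ q hn f1 f2 f3).
  - move=> t ht3; have [] := oth t; try (apply/eqP; lia); done.
move=> t.
case: (ltrP t k) => htk.
  have [ow owt] : word E' t = word E t /\ wt E' t = wt E t by apply: oth; apply/eqP; lia.
  apply: (Inv_at IE ow owt) => q; apply: hle; lia.
have : t = k \/ t = k + 1 \/ k + 2 <= t by lia.
case=> [->|[->|ht3]]; last first.
  have [ow owt] : word E' t = word E t /\ wt E' t = wt E t by apply: oth; apply/eqP; lia.
  by apply: (Inv_at IE ow owt) => q; apply: hfar.
-
  rewrite w'1 wt1 => p hp i j hi hj s hs.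
  have f1' : Dv n ((v:nat)%:Z - (u:nat)%:Z) = false.
    by rewrite -DvN opprB.
  have [s2 s1 g] := @sw_fix_dist n _ _ _ hn hp f1' f3 f2.
  have l1' : forall r, lab E' (k + 1) r = lab E' k (sw n (v:nat)%:Z r).
    by move=> r; rewrite l1 hlabk.
  apply: (IE k p) => //.
  - by rewrite -s1 -l1.
  - by rewrite -s2 -l1.
  - apply: (CL_ext _ hs) => b.
    rewrite (below_sw hn l1' g); split; move=> [r [h1 h2]]; exists r; rewrite ?hlabk in h2 *; by [].
-
  rewrite w'0 wt0 => p hp i j hi hj s hs.
  have [s2 s1 g] := @sw_fix_dist n _ _ _ hn hp f1 f2 f3.
  apply: (IE (k + 1) p) => //.
  - by rewrite m1 s1 -hlabk.
  - by rewrite m1 s2 -hlabk.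
  - apply: (CL_sw hn m1 g).
    apply: (CL_ext _ hs) => b; split; move=> [r [h1 h2]]; exists r; rewrite ?hlabk in h2 *; by [].
Qed.

Theorem theorem5p5 (R : realFieldType) (n : nat) (alpha : 'I_n -> R)
    (tau : 'rV[int]_n -> R) (D : diagram R n) (t0 : int) :
  (3 <= n)%N ->
  biinf_reduced (word D) ->
  consistent D ->
  (forall p, lab D t0 p = p) ->
  (forall s, tau s != 0) ->
  BHZ_datum alpha tau ->
  cylindric tau ->
  (forall (t p : int), (p %% n)%Z = (word D t : nat)%:Z ->
     forall i j : 'I_n,
       (lab D t (p + 1) %% n)%Z = (i : nat)%:Z ->
       (lab D t p %% n)%Z = (j : nat)%:Z ->
       forall s, chamber_label (lab D) t p s ->
         wt D t = crossing_weight alpha tau i j s) ->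
  forall D' : diagram R n, reachable D D' ->
  forall (t p : int), (p %% n)%Z = (word D' t : nat)%:Z ->
     forall i j : 'I_n,
       (lab D' t (p + 1) %% n)%Z = (i : nat)%:Z ->
       (lab D' t p %% n)%Z = (j : nat)%:Z ->
       exists s, chamber_label (lab D') t p s /\
         wt D' t = crossing_weight alpha tau i j s.
Proof.
move=> hn hred cD hlab0 ht hb hcyl hw D' hr.
have hn0 : (0 < n)%N by lia.
have aD : forall t, aff n (lab D t).
  apply: (@aff_all _ n D t0 hn cD).
  apply: (@aff_ext n id); last exact: aff_id.
  by move=> q; rewrite hlab0.
have ID : Inv alpha tau D.
  move=> t p hp i j hi hj s hs; apply: (hw t p _ i j _ _ s hs); by apply/resD.
have key : consistent D' /\ (forall t, aff n (lab D' t)) /\ Inv alpha tau D'.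
  elim: hr => [|D1 D2 _ [c1 [a1 i1]] [k [hm|hm]]]; first by [].
  - exact: (@braid_pres _ _ _ _ _ _ _ hn ht hb c1 a1 i1 hm).
  - exact: (@comm_pres _ _ _ _ _ _ _ hn c1 a1 i1 hm).
move=> t p hp i j hi hj.
have [_ [aD' ID']] := key.
have [s hs] := @CL_exists n (lab D') t p hn0 (aD' t).
exists s; split => //; apply: (ID' t p) => //; by apply/resD.
Qed.
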